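(* Consider the extreme Kerr case $Q=0$, $M=|a|>0$. If for some half-integer $k$ there is an energy eigenvalue $\omega\in\mathbb{R}$ (a bound state of a Dirac particle of rest mass $m>0$), then $Mm>\frac14$.
   Context: Fix real numbers $M>0$, $a$, $Q$ with $M^2=a^2+Q^2$ and put $\rho:=M$. Fix the rest mass $m>0$ and charge $e\in\mathbb{R}$ of a Dirac particle and a half-integer $k\in\{\pm\frac12,\pm\frac32,\dots\}$. For $\omega,\lambda\in\mathbb{R}$ consider the radial system for $f:(\rho,\infty)\to\mathbb{C}^2$, $$\begin{pmatrix}(r-\rho)\frac{d}{dr}+\frac{iV(r)}{r-\rho} & imr-\lambda\\ -imr-\lambda & (r-\rho)\frac{d}{dr}-\frac{iV(r)}{r-\rho}\end{pmatrix}f(r)=0,\qquad V(r):=\omega(r^2+a^2)+ka+eQr,$$ and the angular system for $g:(0,\pi)\to\mathbb{C}^2$, $$\begin{pmatrix}\frac{d}{d\theta}+\frac{\cot\theta}{2}-W(\theta) & -am\cos\theta+\lambda\\ am\cos\theta+\lambda & -\frac{d}{d\theta}-\frac{\cot\theta}{2}-W(\theta)\end{pmatrix}g(\theta)=0,\qquad W(\theta):=a\omega\sin\theta+\frac{k}{\sin\theta}.$$ A number $\omega\in\mathbb{R}$ is called an energy eigenvalue (for azimuthal quantum number $k$) if there exist $\lambda\in\mathbb{R}$ and nontrivial solutions $f$ of the radial system and $g$ of the angular system with $$\int_\rho^\infty|f(r)|^2\frac{r^2+a^2}{(r-\rho)^2}\,dr<\infty,\qquad\int_0^\pi|g(\theta)|^2\sin\theta\,d\theta<\infty.$$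 *)

(* Defs.v *)
From Stdlib Require Import Reals Lra ZArith.
From Coquelicot Require Import Coquelicot.
Open Scope R_scope.

Definition C_is_derive (f : R -> C) (x : R) (l : C) : Prop :=
  is_derive (fun t => Re (f t)) x (Re l) /\ is_derive (fun t => Im (f t)) x (Im l).

Definition half_integer (k : R) : Prop := exists n : Z, k = IZR n + /2.

Definition Vrad (a Q e omega k r : R) : R :=
  omega * (r ^ 2 + a ^ 2) + k * a + e * Q * r.

Definition Wang (a omega k th : R) : R :=
  a * omega * sin th + k / sin th.

Definition cotan (th : R) : R := cos th / sin th.

Definition radial_solution (M a Q m e k omega lambda : R) (f1 f2 : R -> C) : Prop :=
  let rho := M in
  forall r, rho < r ->
    exists d1 d2 : C,
      C_is_derive f1 r d1 /\ C_is_derive f2 r d2 /\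
      (RtoC (r - rho) * d1 + Ci * RtoC (Vrad a Q e omega k r / (r - rho)) * f1 r
         + (Ci * RtoC (m * r) - RtoC lambda) * f2 r = 0)%C /\
      ((- (Ci * RtoC (m * r)) - RtoC lambda) * f1 r + RtoC (r - rho) * d2
         - Ci * RtoC (Vrad a Q e omega k r / (r - rho)) * f2 r = 0)%C.

Definition angular_solution (a m k omega lambda : R) (g1 g2 : R -> C) : Prop :=
  forall th, 0 < th < PI ->
    exists d1 d2 : C,
      C_is_derive g1 th d1 /\ C_is_derive g2 th d2 /\
      (d1 + RtoC (cotan th / 2) * g1 th - RtoC (Wang a omega k th) * g1 th
         + RtoC (- (a * m * cos th) + lambda) * g2 th = 0)%C /\
      (RtoC (a * m * cos th + lambda) * g1 th - d2 - RtoC (cotan th / 2) * g2 th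
         - RtoC (Wang a omega k th) * g2 th = 0)%C.

Definition normsq2 (z1 z2 : C) : R := (Cmod z1) ^ 2 + (Cmod z2) ^ 2.

Definition energy_eigenvalue (M a Q m e k omega : R) : Prop :=
  let rho := M in
  exists (lambda : R) (f1 f2 g1 g2 : R -> C),
    radial_solution M a Q m e k omega lambda f1 f2 /\
    (exists r, rho < r /\ (f1 r <> 0%C \/ f2 r <> 0%C)) /\
    ex_RInt_gen (fun r => normsq2 (f1 r) (f2 r) * (r ^ 2 + a ^ 2) / (r - rho) ^ 2)
      (at_right rho) (Rbar_locally p_infty) /\
    angular_solution a m k omega lambda g1 g2 /\
    (exists th, 0 < th < PI /\ (g1 th <> 0%C \/ g2 th <> 0%C)) /\
    ex_RInt_gen (fun th => normsq2 (g1 th) (g2 th) * sin th)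
      (at_right 0) (at_left PI).

(* Main.v *)
Require Import Defs.
From Stdlib Require Import Reals Lra Lia ZArith FunctionalExtensionality.
From Coquelicot Require Import Coquelicot.
Open Scope R_scope.

Lemma mono (g : R -> R) x y : x <= y ->
  (forall t, x <= t <= y -> exists d, is_derive g t d /\ 0 <= d) -> g x <= g y.
Proof.
  intros Hxy H.
  assert (HD : forall t, x <= t <= y -> is_derive g t (Derive g t) /\ 0 <= Derive g t).
  { intros t Ht. destruct (H t Ht) as [d [Hd Hd0]].
    rewrite (is_derive_unique g t d Hd). auto. }
  destruct (MVT_gen g x y (Derive g)) as [c [Hc Heq]].
  - intros t Ht. rewrite Rmin_left in Ht by lra. rewrite Rmax_right in Ht by lra.
    apply HD. lra.
  - intros t Ht. rewrite Rmin_left in Ht by lra. rewrite Rmax_right in Ht by lra.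
    apply continuity_pt_filterlim. apply (ex_derive_continuous g t).
    exists (Derive g t). apply (HD t Ht).
  - rewrite Rmin_left in Hc by lra. rewrite Rmax_right in Hc by lra.
    destruct (HD c Hc) as [_ H0].
    assert (0 <= Derive g c * (y - x)) by (apply Rmult_le_pos; lra). lra.
Qed.

Lemma expmono (g : R -> R) (c x y : R) : x <= y ->
  (forall t, x <= t <= y -> exists d, is_derive g t d /\ c * g t <= d) ->
  g x * exp (- c * x) <= g y * exp (- c * y).
Proof.
  intros Hxy H.
  apply (mono (fun t => g t * exp (- c * t))); auto.
  intros t Ht. destruct (H t Ht) as [d [Hd Hc]].
  exists (d * exp (- c * t) + g t * (exp (- c * t) * (- c))). split.
  - apply (is_derive_mult g (fun t => exp (- c * t))) with (df := d) (dg := exp (- c * t) * (- c)).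
    + exact Hd.
    + auto_derive; [auto | ring].
    + intros; unfold mult; simpl; ring.
  - pose proof (exp_pos (- c * t)).
    assert (0 <= (d - c * g t) * exp (- c * t)) by (apply Rmult_le_pos; lra).
    nra.
Qed.
Lemma is_derive_neg (f : R -> R) x l : is_derive f x l -> is_derive (fun y => - f y) x (- l).
Proof. intros H. apply (is_derive_opp f x l H). Qed.

Lemma absN (l X Y S c : R) : 2 * Rabs X <= S -> 2 * Rabs Y <= S -> 0 <= c ->
  Rabs (l * X + c * Y) <= (Rabs l + c) * (S / 2).
Proof.
  intros HX HY Hc.
  eapply Rle_trans. apply Rabs_triang. rewrite !Rabs_mult.
  rewrite (Rabs_pos_eq c Hc).
  pose proof (Rabs_pos l). pose proof (Rabs_pos X). pose proof (Rabs_pos Y). nra.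
Qed.

Lemma bnd1 (N u u0 B S : R) : 0 < u0 <= u -> Rabs N <= B * S -> 0 <= B -> 0 <= S ->
  - (B / u0) * S <= N / u /\ N / u <= (B / u0) * S.
Proof.
  intros Hu HN HB HS.
  assert (Rabs (N / u) <= B / u0 * S).
  { unfold Rdiv. rewrite Rabs_mult, Rabs_inv, (Rabs_pos_eq u) by lra.
    pose proof (Rabs_pos N).
    assert (/ u <= / u0) by (apply Rinv_le_contravar; lra).
    assert (0 < / u) by (apply Rinv_0_lt_compat; lra).
    apply Rle_trans with (B * S * / u). apply Rmult_le_compat_r; lra.
    replace (B * / u0 * S) with (B * S * / u0) by ring.
    apply Rmult_le_compat_l; nra. }
  revert H. unfold Rabs; destruct Rcase_abs; intros; lra.
Qed.

Lemma ballR (l e y : R) : ball l e y -> Rabs (y - l) < e.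
Proof. intros H. exact H. Qed.

Lemma gen_core (f : R -> R) F l eps : 0 < eps ->
  is_RInt_gen f F (Rbar_locally p_infty) l ->
  exists Qa : R -> Prop, F Qa /\ exists B, forall a1 a2, Qa a1 -> Qa a2 -> a1 <= a2 ->
    forall b, B < b -> a2 <= b -> ex_RInt f a1 a2 /\ Rabs (RInt f a1 a2) < eps.
Proof.
  intros Heps H.
  assert (Hl : locally l (ball l (pos_div_2 (mkposreal eps Heps)))) by apply locally_ball.
  specialize (H _ Hl).
  destruct H as [Qa Qb HQa [B HB] Hall].
  exists Qa. split; auto. exists B.
  intros a1 a2 H1 H2 H12 b Hb Hb2.
  destruct (Hall a1 b H1 (HB b Hb)) as [y1 [Hy1 Hb1]].
  destruct (Hall a2 b H2 (HB b Hb)) as [y2 [Hy2 Hb2']].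
  simpl in Hy1, Hy2.
  assert (E1 : ex_RInt f a1 b) by (exists y1; exact Hy1).
  assert (E2 : ex_RInt f a2 b) by (exists y2; exact Hy2).
  assert (E12 : ex_RInt f a1 a2) by (apply (ex_RInt_Chasles_1 (V:=R_CompleteNormedModule) f a1 a2 b); auto).
  split; auto.
  pose proof (RInt_Chasles f a1 a2 b E12 E2) as HC.
  rewrite (is_RInt_unique f a1 b y1 Hy1) in HC.
  rewrite (is_RInt_unique f a2 b y2 Hy2) in HC.
  apply ballR in Hb1. apply ballR in Hb2'. simpl in Hb1, Hb2'.
  unfold plus in HC; simpl in HC.
  replace (RInt f a1 a2) with (y1 - y2) by lra.
  unfold Rabs in *. repeat destruct Rcase_abs; lra.
Qed.


Lemma Qbounds (A v0 B S e1 e2 av : R) : av = Rabs v0 -> Rabs (A - v0) <= e1 ->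
  Rabs B <= e2 * S -> 0 <= S -> 0 <= e2 -> e1 + e2 <= av / 2 ->
  av / 2 * S <= Rabs (A * S + B) /\ Rabs (A * S + B) <= 3 * av / 2 * S.
Proof.
  intros Hav HA HB HS He2 He.
  assert (HA1 : av - e1 <= Rabs A).
  { pose proof (Rabs_triang_inv v0 A) as H. rewrite Rabs_minus_sym in H. lra. }
  assert (HA2 : Rabs A <= av + e1).
  { pose proof (Rabs_triang_inv A v0) as H. lra. }
  assert (HAS : Rabs (A * S) = Rabs A * S) by (rewrite Rabs_mult, (Rabs_pos_eq S); auto).
  pose proof (Rabs_triang (A * S) B).
  pose proof (Rabs_triang_inv (A * S) (- B)) as HT. rewrite Rabs_Ropp in HT.
  replace (A * S - - B) with (A * S + B) in HT by ring.
  pose proof (Rabs_pos B).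
  assert ((av - e1) * S <= Rabs A * S) by (apply Rmult_le_compat_r; auto).
  assert (Rabs A * S <= (av + e1) * S) by (apply Rmult_le_compat_r; auto).
  assert (e2 * S <= av / 2 * S) by (apply Rmult_le_compat_r; lra).
  assert (0 <= e1) by (pose proof (Rabs_pos (A - v0)); lra).
  assert (e1 * S <= av / 2 * S) by (apply Rmult_le_compat_r; lra).
  assert ((e1 + e2) * S <= av / 2 * S) by (apply Rmult_le_compat_r; lra).
  rewrite HAS in *. split; lra.
Qed.

Lemma divlb (p q c d : R) : 0 <= c <= p -> 0 < q <= d -> c / d <= p / q.
Proof.
  intros Hc Hq. unfold Rdiv.
  apply Rle_trans with (p * / d).
  - apply Rmult_le_compat_r; [left; apply Rinv_0_lt_compat; lra | lra].
  - apply Rmult_le_compat_l; [lra|]. apply Rinv_le_contravar; lra.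
Qed.

Lemma RInt_lb (f : R -> R) a b c : a <= b -> ex_RInt f a b ->
  (forall x, a < x < b -> c <= f x) -> c * (b - a) <= RInt f a b.
Proof.
  intros Hab He Hf.
  assert (RInt (fun _ => c) a b <= RInt f a b).
  { apply RInt_le; auto. apply ex_RInt_const. }
  rewrite RInt_const in H. unfold scal in H; simpl in H; unfold mult in H; simpl in H. lra.
Qed.

Lemma gen_right (f : R -> R) M l eps : 0 < eps ->
  is_RInt_gen f (at_right M) (Rbar_locally p_infty) l ->
  exists B, forall b1 b2, B < b1 -> b1 <= b2 -> ex_RInt f b1 b2 /\ Rabs (RInt f b1 b2) < eps.
Proof.
  intros Heps H.
  assert (Hl : locally l (ball l (pos_div_2 (mkposreal eps Heps)))) by apply locally_ball.
  specialize (H _ Hl).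
  destruct H as [Qa Qb [eta Heta] [B0 HB] Hall].
  set (a := M + eta / 2).
  assert (Ha : Qa a).
  { apply Heta. change (Rabs (a - M) < eta). unfold a. rewrite Rabs_pos_eq.
    pose proof (cond_pos eta); lra. pose proof (cond_pos eta); lra.
    unfold a. pose proof (cond_pos eta); lra. }
  exists (Rmax B0 a). intros b1 b2 Hb1 H12.
  pose proof (Rmax_l B0 a). pose proof (Rmax_r B0 a).
  destruct (Hall a b1 Ha (HB b1 ltac:(lra))) as [y1 [Hy1 Hb1']].
  destruct (Hall a b2 Ha (HB b2 ltac:(lra))) as [y2 [Hy2 Hb2']].
  simpl in Hy1, Hy2.
  assert (E1 : ex_RInt f a b1) by (exists y1; exact Hy1).
  assert (E2 : ex_RInt f a b2) by (exists y2; exact Hy2).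
  assert (E12 : ex_RInt f b1 b2) by (apply (ex_RInt_Chasles_2 (V:=R_CompleteNormedModule) f a b1 b2); auto; lra).
  split; auto.
  pose proof (RInt_Chasles f a b1 b2 E1 E12) as HC.
  rewrite (is_RInt_unique f a b1 y1 Hy1) in HC.
  rewrite (is_RInt_unique f a b2 y2 Hy2) in HC.
  change (Rabs (y1 - l) < eps / 2) in Hb1'. change (Rabs (y2 - l) < eps / 2) in Hb2'.
  unfold plus in HC; simpl in HC.
  replace (RInt f b1 b2) with (y2 - y1) by lra.
  unfold Rabs in *. repeat destruct Rcase_abs; lra.
Qed.

Lemma gron_aux (q dq s hc av : R) : 0 < av -> 0 <= hc -> Rabs dq <= hc * s ->
  av / 2 * s <= Rabs q -> q * dq <= (2 * hc / av) * q ^ 2.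
Proof.
  intros Hav Hhc Hd Hq.
  assert (q * dq <= Rabs q * Rabs dq) by (rewrite <- Rabs_mult; apply Rle_abs).
  assert (s <= 2 / av * Rabs q).
  { apply Rmult_le_reg_l with (av / 2). lra.
    replace (av / 2 * (2 / av * Rabs q)) with (Rabs q) by (field; lra). lra. }
  assert (Rabs dq <= hc * (2 / av * Rabs q)) by (eapply Rle_trans; [apply Hd| apply Rmult_le_compat_l; lra]).
  assert (Rabs q * Rabs dq <= Rabs q * (hc * (2 / av * Rabs q))) by (apply Rmult_le_compat_l; [apply Rabs_pos | lra]).
  replace (2 * hc / av * q ^ 2) with (Rabs q * (hc * (2 / av * Rabs q))).
  lra.
  replace (q ^ 2) with (Rabs q * Rabs q). field; lra.
  rewrite <- Rabs_mult. rewrite Rabs_pos_eq. ring. nra.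
Qed.

Lemma exp_le' (x y : R) : x <= y -> exp x <= exp y.
Proof. intros [H|H]. left; apply exp_increasing; auto. subst; lra. Qed.

Lemma core (M a m lam om k : R) (x1 y1 x2 y2 : R -> R) (r0 : R) :
 0 < M -> a^2 = M^2 -> 0 < m ->
 (forall t, M < t -> exists dx1 dy1 dx2 dy2,
   is_derive x1 t dx1 /\ is_derive y1 t dy1 /\ is_derive x2 t dx2 /\ is_derive y2 t dy2 /\
   dx1 = ((om*(t^2+a^2)+k*a)/(t-M) * y1 t + lam * x2 t + m*t*y2 t)/(t-M) /\
   dy1 = (- ((om*(t^2+a^2)+k*a)/(t-M)) * x1 t + lam * y2 t - m*t*x2 t)/(t-M) /\
   dx2 = (lam * x1 t - m*t*y1 t - (om*(t^2+a^2)+k*a)/(t-M) * y2 t)/(t-M) /\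
   dy2 = (m*t*x1 t + lam * y1 t + (om*(t^2+a^2)+k*a)/(t-M) * x2 t)/(t-M)) ->
 M < r0 -> 0 < x1 r0^2 + y1 r0^2 + x2 r0^2 + y2 r0^2 ->
 ex_RInt_gen (fun t => (x1 t^2 + y1 t^2 + x2 t^2 + y2 t^2) * (t^2+a^2)/(t-M)^2)
   (at_right M) (Rbar_locally p_infty) ->
 om*(M^2+a^2) + k*a = 0 /\ Rabs om < m.
Proof.
  intros HM Ha Hm Hder Hr0 HS0 Hint.
  set (W := fun t => (om*(t^2+a^2)+k*a)/(t-M)) in *.
  set (S := fun t => x1 t^2 + y1 t^2 + x2 t^2 + y2 t^2) in *.
  set (X := fun t => x1 t * x2 t + y1 t * y2 t).
  set (Y := fun t => x1 t * y2 t - y1 t * x2 t).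
  assert (HS0' : 0 < S r0) by exact HS0. clear HS0.
  assert (F1 : forall t, 0 <= S t) by (intros; unfold S; nra).
  assert (F2 : forall t, 2 * Rabs (X t) <= S t /\ 2 * Rabs (Y t) <= S t /\ 4 * (X t ^2 + Y t ^2) <= S t ^ 2).
  { intros t. unfold S, X, Y. split; [|split].
    - pose proof (pow2_ge_0 (x1 t - x2 t)); pose proof (pow2_ge_0 (x1 t + x2 t));
      pose proof (pow2_ge_0 (y1 t - y2 t)); pose proof (pow2_ge_0 (y1 t + y2 t)).
      unfold Rabs; destruct Rcase_abs; nra.
    - pose proof (pow2_ge_0 (x1 t - y2 t)); pose proof (pow2_ge_0 (x1 t + y2 t));
      pose proof (pow2_ge_0 (y1 t - x2 t)); pose proof (pow2_ge_0 (y1 t + x2 t)).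
      unfold Rabs; destruct Rcase_abs; nra.
    - assert (E : (x1 t * x2 t + y1 t * y2 t) ^ 2 + (x1 t * y2 t - y1 t * x2 t) ^ 2
                 = (x1 t ^2 + y1 t^2) * (x2 t^2 + y2 t^2)) by ring.
      rewrite E. pose proof (pow2_ge_0 (x1 t ^2 + y1 t^2 - x2 t^2 - y2 t^2)). nra. }
  assert (DS : forall t, M < t -> is_derive S t (4*(lam*X t + m*t*Y t)/(t-M))).
  { intros t Ht. destruct (Hder t Ht) as (dx1 & dy1 & dx2 & dy2 & H1 & H2 & H3 & H4 & E1 & E2 & E3 & E4).
    unfold S. auto_derive.
    - repeat split; eexists; eauto.
    - replace (Derive (fun x => x1 x) t) with dx1 by (symmetry; apply is_derive_unique; exact H1).
      replace (Derive (fun x => y1 x) t) with dy1 by (symmetry; apply is_derive_unique; exact H2).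
      replace (Derive (fun x => x2 x) t) with dx2 by (symmetry; apply is_derive_unique; exact H3).
      replace (Derive (fun x => y2 x) t) with dy2 by (symmetry; apply is_derive_unique; exact H4).
      rewrite E1, E2, E3, E4. unfold X, Y. field. lra. }
  assert (DX : forall t, M < t -> is_derive X t ((-2*W t*Y t + lam*S t)/(t-M))).
  { intros t Ht. destruct (Hder t Ht) as (dx1 & dy1 & dx2 & dy2 & H1 & H2 & H3 & H4 & E1 & E2 & E3 & E4).
    unfold X. auto_derive.
    - repeat split; eexists; eauto.
    - replace (Derive (fun x => x1 x) t) with dx1 by (symmetry; apply is_derive_unique; exact H1).
      replace (Derive (fun x => y1 x) t) with dy1 by (symmetry; apply is_derive_unique; exact H2).
      replace (Derive (fun x => x2 x) t) with dx2 by (symmetry; apply is_derive_unique; exact H3).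
      replace (Derive (fun x => y2 x) t) with dy2 by (symmetry; apply is_derive_unique; exact H4).
      rewrite E1, E2, E3, E4. unfold Y, S, W. field. lra. }
  assert (DY : forall t, M < t -> is_derive Y t ((2*W t*X t + m*t*S t)/(t-M))).
  { intros t Ht. destruct (Hder t Ht) as (dx1 & dy1 & dx2 & dy2 & H1 & H2 & H3 & H4 & E1 & E2 & E3 & E4).
    unfold Y. auto_derive.
    - repeat split; eexists; eauto.
    - replace (Derive (fun x => x1 x) t) with dx1 by (symmetry; apply is_derive_unique; exact H1).
      replace (Derive (fun x => y1 x) t) with dy1 by (symmetry; apply is_derive_unique; exact H2).
      replace (Derive (fun x => x2 x) t) with dx2 by (symmetry; apply is_derive_unique; exact H3).
      replace (Derive (fun x => y2 x) t) with dy2 by (symmetry; apply is_derive_unique; exact H4).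
      rewrite E1, E2, E3, E4. unfold X, S, W. field. lra. }
  assert (Hint' : ex_RInt_gen (fun t => S t * (t^2+a^2)/(t-M)^2) (at_right M) (Rbar_locally p_infty)) by exact Hint.
  clear Hint. clearbody S X Y. clear Hder.
  assert (Spos : forall t, M < t -> 0 < S t).
  { intros t Ht. destruct (Rle_lt_dec r0 t) as [Hle | Hlt].
    - set (K := 2 * (Rabs lam + m * t) / (r0 - M)).
      assert (HK : 0 <= 2 * (Rabs lam + m * t)) by (pose proof (Rabs_pos lam); nra).
      pose proof (expmono S (- K) r0 t Hle) as HE.
      assert (HE' : S r0 * exp (- - K * r0) <= S t * exp (- - K * t)).
      { apply HE. intros s Hs. exists (4*(lam*X s + m*s*Y s)/(s-M)). split.
        - apply DS. lra.
        - destruct (F2 s) as [HX [HY _]].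
          pose proof (absN lam (X s) (Y s) (S s) (m * s) HX HY ltac:(nra)) as HA.
          destruct (bnd1 (4*(lam*X s + m*s*Y s)) (s - M) (r0 - M) (2 * (Rabs lam + m * t)) (S s))
            as [HB _]; try lra; auto.
          all: try (unfold K in *; lra).
          all: rewrite Rabs_mult, (Rabs_pos_eq 4) by lra;
            pose proof (Rabs_pos lam); pose proof (F1 s);
            assert ((Rabs lam + m * s) * (S s / 2) <= (Rabs lam + m * t) * (S s / 2)) by
              (apply Rmult_le_compat_r; nra);
            lra. }
      pose proof (exp_pos (- - K * r0)). pose proof (exp_pos (- - K * t)).
      assert (0 < S r0 * exp (- - K * r0)) by (apply Rmult_lt_0_compat; [lra | apply exp_pos]).
      destruct (Rle_lt_dec (S t) 0) as [Hs0|Hs0]; auto.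
      assert (S t * exp (- - K * t) <= 0) by (apply Rmult_le_0_r; lra). lra.
    - set (K := 2 * (Rabs lam + m * r0) / (t - M)).
      assert (HK : 0 <= 2 * (Rabs lam + m * r0)) by (pose proof (Rabs_pos lam); nra).
      pose proof (expmono (fun s => - S s) K t r0 (Rlt_le _ _ Hlt)) as HE.
      assert (HE' : - S t * exp (- K * t) <= - S r0 * exp (- K * r0)).
      { apply HE. intros s Hs. exists (- (4*(lam*X s + m*s*Y s)/(s-M))). split.
        - apply is_derive_neg. apply DS. lra.
        - destruct (F2 s) as [HX [HY _]].
          pose proof (absN lam (X s) (Y s) (S s) (m * s) HX HY ltac:(nra)) as HA.
          destruct (bnd1 (4*(lam*X s + m*s*Y s)) (s - M) (t - M) (2 * (Rabs lam + m * r0)) (S s))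
            as [_ HB]; try lra; auto.
          all: try (unfold K in *; lra).
          all: rewrite Rabs_mult, (Rabs_pos_eq 4) by lra;
            pose proof (Rabs_pos lam); pose proof (F1 s);
            assert ((Rabs lam + m * s) * (S s / 2) <= (Rabs lam + m * r0) * (S s / 2)) by
              (apply Rmult_le_compat_r; nra);
            lra. }
      pose proof (exp_pos (- K * r0)). pose proof (exp_pos (- K * t)).
      assert (0 < S r0 * exp (- K * r0)) by (apply Rmult_lt_0_compat; [lra | apply exp_pos]).
      destruct (Rle_lt_dec (S t) 0) as [Hs0|Hs0]; auto.
      assert (S t * exp (- K * t) <= 0) by (apply Rmult_le_0_r; lra). lra. }
  destruct Hint' as [lI HI].
  assert (Hv0 : om*(M^2+a^2) + k*a = 0).
  { set (v0 := om*(M^2+a^2) + k*a).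
    destruct (Req_dec v0 0) as [Hv|Hv]; auto. exfalso.
    set (av := Rabs v0).
    assert (Hav : 0 < av) by (apply Rabs_pos_lt; auto).
    set (Q := fun t => (om*(t^2+a^2)+k*a) * S t + 2*(t-M)*(m*t*X t - lam*Y t)).
    assert (HQdef : forall t, Q t = (om*(t^2+a^2)+k*a) * S t + 2*(t-M)*(m*t*X t - lam*Y t)) by reflexivity.
    assert (DQ : forall t, M < t -> is_derive Q t (2*om*t*S t + 2*(m*t*X t - lam*Y t) + 2*m*(t-M)*X t)).
    { intros t Ht. unfold Q. auto_derive.
      - repeat split; eexists; [apply DS|apply DX|apply DY]; lra.
      - replace (Derive (fun x => S x) t) with (4*(lam*X t + m*t*Y t)/(t-M)) by (symmetry; apply is_derive_unique; apply DS; lra).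
        replace (Derive (fun x => X x) t) with ((-2*W t*Y t + lam*S t)/(t-M)) by (symmetry; apply is_derive_unique; apply DX; lra).
        replace (Derive (fun x => Y x) t) with ((2*W t*X t + m*t*S t)/(t-M)) by (symmetry; apply is_derive_unique; apply DY; lra).
        unfold W. field. lra. }
    clearbody Q.
    set (L := Rabs om*(2*M+1) + m*(M+1) + Rabs lam).
    assert (HL : 0 <= L) by (unfold L; pose proof (Rabs_pos om); pose proof (Rabs_pos lam); nra).
    set (dl := Rmin 1 (av/(2*(2*L+1)))).
    assert (Hdl : 0 < dl /\ dl <= 1 /\ dl * L <= av/2).
    { unfold dl. split; [|split].
      - apply Rmin_pos; [lra|]. apply Rdiv_lt_0_compat; lra.
      - apply Rmin_l.
      - apply Rle_trans with (av/(2*(2*L+1)) * L).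
        + apply Rmult_le_compat_r; auto. apply Rmin_r.
        + apply Rmult_le_reg_l with (2*(2*L+1)). lra.
          replace (2 * (2 * L + 1) * (av / (2 * (2 * L + 1)) * L)) with (av * L) by (field; lra).
          nra. }
    set (r1 := M + dl).
    assert (HQb : forall t, M < t <= r1 -> av/2 * S t <= Rabs (Q t) /\ Rabs (Q t) <= 3*av/2 * S t).
    { intros t Ht. rewrite HQdef.
      destruct (F2 t) as [HX [HY _]].
      apply (Qbounds _ v0 _ _ ((t-M)*(Rabs om*(2*M+1))) ((t-M)*(m*(M+1)+Rabs lam)) av); auto.
      - replace (om * (t ^ 2 + a ^ 2) + k * a - v0) with (om*((t-M)*(t+M))) by (unfold v0; ring).
        rewrite Rabs_mult, Rabs_mult, (Rabs_pos_eq (t-M)), (Rabs_pos_eq (t+M)) by lra.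
        pose proof (Rabs_pos om). unfold r1 in Ht.
        assert (t + M <= 2*M+1) by lra.
        assert (0 <= t - M) by lra.
        assert (0 <= Rabs om * (t - M)) by (apply Rmult_le_pos; lra).
        assert (0 <= (Rabs om * (t - M)) * (2*M+1 - (t+M))) by (apply Rmult_le_pos; lra).
        nra.
      - pose proof (absN (-lam) (Y t) (X t) (S t) (m*t) HY HX ltac:(nra)) as HA.
        rewrite Rabs_Ropp in HA.
        replace (2 * (t - M) * (m * t * X t - lam * Y t)) with ((2*(t-M)) * (-lam * Y t + m*t*X t)) by ring.
        rewrite Rabs_mult, (Rabs_pos_eq (2*(t-M))) by lra.
        pose proof (F1 t). unfold r1 in Ht.
        assert ((Rabs lam + m*t) * (S t) <= (m*(M+1) + Rabs lam) * S t) by (apply Rmult_le_compat_r; nra).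
        assert (2*(t-M) * Rabs (- lam * Y t + m * t * X t) <= 2*(t-M) * ((Rabs lam + m * t) * (S t / 2))) by
          (apply Rmult_le_compat_l; lra).
        assert (2*(t-M) * ((Rabs lam + m * t) * (S t / 2)) <= (t-M) * ((m*(M+1) + Rabs lam) * S t)) by
          (replace (2*(t-M) * ((Rabs lam + m * t) * (S t / 2))) with ((t-M) * ((Rabs lam + m * t) * S t)) by field;
           apply Rmult_le_compat_l; lra).
        lra.
      - unfold r1 in Ht. pose proof (Rabs_pos lam). apply Rmult_le_pos; nra.
      - replace ((t - M) * (Rabs om * (2 * M + 1)) + (t - M) * (m * (M + 1) + Rabs lam)) with ((t-M)*L) by (unfold L; ring).
        unfold r1 in Ht. destruct Hdl as [_ [_ Hdl]].
        apply Rle_trans with (dl * L); auto. apply Rmult_le_compat_r; lra. }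
    set (Hc := 2*Rabs om*(M+1) + m*(M+1) + Rabs lam + m).
    assert (HHc : 0 <= Hc) by (unfold Hc; pose proof (Rabs_pos om); pose proof (Rabs_pos lam); nra).
    assert (HQd : forall t, M < t <= r1 ->
      Rabs (2*om*t*S t + 2*(m*t*X t - lam*Y t) + 2*m*(t-M)*X t) <= Hc * S t).
    { intros t Ht. unfold r1 in Ht. destruct Hdl as [_ [Hdl1 _]].
      destruct (F2 t) as [HX [HY _]]. pose proof (F1 t).
      pose proof (absN (-lam) (Y t) (X t) (S t) (m*t) HY HX ltac:(nra)) as HA.
      rewrite Rabs_Ropp in HA.
      replace (2 * (m * t * X t - lam * Y t)) with (2 * (-lam * Y t + m*t*X t)) by ring.
      eapply Rle_trans. apply Rabs_triang.
      eapply Rle_trans. apply Rplus_le_compat_r. apply Rabs_triang.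
      rewrite !Rabs_mult. rewrite (Rabs_pos_eq 2), (Rabs_pos_eq t), (Rabs_pos_eq m), (Rabs_pos_eq (t-M)) by lra.
      pose proof (Rabs_pos om). pose proof (Rabs_pos lam). pose proof (Rabs_pos (X t)).
      assert (2 * Rabs om * t * S t <= 2 * Rabs om * (M+1) * S t).
      { apply Rmult_le_compat_r; auto. apply Rmult_le_compat_l; lra. }
      assert ((Rabs lam + m * t) * S t <= (Rabs lam + m * (M+1)) * S t) by (apply Rmult_le_compat_r; nra).
      assert (2 * m * (t - M) * Rabs (X t) <= m * S t).
      { assert (2 * (t-M) * Rabs (X t) <= S t).
        { apply Rle_trans with (2 * Rabs (X t)); auto. nra. }
        nra. }
      unfold Hc. rewrite (Rabs_pos_eq (S t)) by lra. nra. }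
    set (K := 2 * Hc / av).
    assert (HK : 0 <= K) by (unfold K; apply Rmult_le_pos; [lra | left; apply Rinv_0_lt_compat; lra]).
    assert (Hr1 : M < r1 <= r1) by (unfold r1; lra).
    assert (HQr1 : 0 < Q r1 ^ 2).
    { destruct (HQb r1 Hr1) as [H1 _]. pose proof (Spos r1 ltac:(lra)).
      assert (0 < Rabs (Q r1)) by nra.
      rewrite <- Rsqr_pow2, Rsqr_abs. unfold Rsqr. nra. }
    assert (HQt : forall t, M < t <= r1 -> Q r1 ^ 2 <= Q t ^ 2 * exp (2 * K)).
    { intros t Ht.
      pose proof (expmono (fun s => - Q s ^ 2) (2 * K) t r1 ltac:(lra)) as HE.
      assert (HE' : - Q t ^ 2 * exp (- (2 * K) * t) <= - Q r1 ^ 2 * exp (- (2 * K) * r1)).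
      { apply HE. intros s Hs.
        exists (- (2 * Q s * (2*om*s*S s + 2*(m*s*X s - lam*Y s) + 2*m*(s-M)*X s))). split.
        - auto_derive.
          + eexists. apply DQ. lra.
          + replace (Derive (fun x => Q x) s) with (2*om*s*S s + 2*(m*s*X s - lam*Y s) + 2*m*(s-M)*X s)
              by (symmetry; apply is_derive_unique; apply DQ; lra). ring.
        - assert (Hs' : M < s <= r1) by lra.
          pose proof (gron_aux (Q s) (2*om*s*S s + 2*(m*s*X s - lam*Y s) + 2*m*(s-M)*X s) (S s) Hc av Hav HHc
            (HQd s Hs') (proj1 (HQb s Hs'))). fold K in H. lra. }
      assert (Hexp : exp (- (2 * K) * t) <= exp (- (2 * K) * r1) * exp (2 * K)).
      { rewrite <- exp_plus. apply exp_le'. unfold r1 in *. destruct Hdl as [_ [Hdl1 _]]. nra. }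
      pose proof (exp_pos (- (2 * K) * r1)). pose proof (exp_pos (- (2 * K) * t)).
      assert (Q r1 ^ 2 * exp (- (2 * K) * r1) <= Q t ^ 2 * exp (- (2 * K) * t)) by lra.
      assert (Q t ^ 2 * exp (- (2 * K) * t) <= Q t ^ 2 * (exp (- (2 * K) * r1) * exp (2 * K))).
      { apply Rmult_le_compat_l; auto. apply pow2_ge_0. }
      apply Rmult_le_reg_r with (exp (- (2 * K) * r1)); auto. nra. }
    set (c0 := Q r1 ^ 2 / exp (2 * K) / (3 * av / 2) ^ 2).
    assert (Hc0 : 0 < c0).
    { unfold c0. apply Rdiv_lt_0_compat. apply Rdiv_lt_0_compat; auto. apply exp_pos. nra. }
    set (sm := Rmin 1 c0).
    assert (Hsm : 0 < sm) by (apply Rmin_pos; lra).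
    assert (HSlow : forall t, M < t <= r1 -> sm <= S t).
    { intros t Ht. pose proof (HQt t Ht). destruct (HQb t Ht) as [_ H2]. pose proof (F1 t).
      assert (Q t ^ 2 <= (3 * av / 2 * S t) ^ 2).
      { rewrite <- !Rsqr_pow2. rewrite Rsqr_abs. apply Rsqr_incr_1; auto. apply Rabs_pos. nra. }
      assert (c0 <= S t ^ 2).
      { unfold c0. pose proof (exp_pos (2*K)).
        apply Rmult_le_reg_r with ((3 * av / 2) ^ 2). nra.
        replace (Q r1 ^ 2 / exp (2 * K) / (3 * av / 2) ^ 2 * (3 * av / 2) ^ 2) with (Q r1 ^ 2 / exp (2 * K)) by (field; split; lra).
        apply Rmult_le_reg_r with (exp (2 * K)); auto.
        replace (Q r1 ^ 2 / exp (2 * K) * exp (2 * K)) with (Q r1 ^ 2) by (field; lra).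
        apply Rle_trans with (Q t ^ 2 * exp (2 * K)); auto.
        apply Rmult_le_compat_r; [lra|]. replace (S t ^ 2 * (3 * av / 2) ^ 2) with ((3 * av / 2 * S t) ^ 2) by ring. auto. }
      unfold sm. destruct (Rle_lt_dec 1 (S t)).
      - pose proof (Rmin_l 1 c0). lra.
      - pose proof (Rmin_r 1 c0). nra. }
    assert (Heps : 0 < sm * M^2 / 4) by (apply Rdiv_lt_0_compat; [apply Rmult_lt_0_compat; nra | lra]).
    destruct (gen_core _ (at_right M) lI _ Heps HI) as [Qa [[eta Heta] [B HB]]].
    pose proof (cond_pos eta) as Heta0.
    destruct Hdl as [Hdl0 [Hdl1 _]].
    set (h := Rmin (eta / 4) (dl / 2)).
    assert (Hh : 0 < h /\ h <= eta / 4 /\ h <= dl / 2).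
    { unfold h. split; [apply Rmin_pos; lra | split; [apply Rmin_l | apply Rmin_r]]. }
    assert (Qa1 : Qa (M + h)).
    { apply Heta; [| lra]. change (Rabs (M + h - M) < eta). rewrite Rabs_pos_eq; lra. }
    assert (Qa2 : Qa (M + 2 * h)).
    { apply Heta; [| lra]. change (Rabs (M + 2 * h - M) < eta). rewrite Rabs_pos_eq; lra. }
    destruct (HB (M + h) (M + 2*h) Qa1 Qa2 ltac:(lra) (Rmax B (M + 2*h) + 1)) as [Hex Hlt].
    { pose proof (Rmax_l B (M + 2*h)); lra. }
    { pose proof (Rmax_r B (M + 2*h)); lra. }
    pose proof (RInt_lb _ (M + h) (M + 2*h) (sm * M^2 / (4 * h^2)) ltac:(lra) Hex) as Hlb.
    assert (Hlb' : sm * M ^ 2 / (4 * h ^ 2) * (M + 2 * h - (M + h)) <=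
       RInt (fun t => S t * (t ^ 2 + a ^ 2) / (t - M) ^ 2) (M + h) (M + 2 * h)).
    { apply Hlb. intros x Hx. cbv beta.
      apply divlb.
      - split. nra.
        apply Rmult_le_compat; [lra | nra | apply HSlow; unfold r1; lra | nra].
      - split. nra. nra. }
    replace (sm * M ^ 2 / (4 * h ^ 2) * (M + 2 * h - (M + h))) with (sm * M^2 / (4 * h)) in Hlb' by (field; lra).
    assert (sm * M^2 / 4 <= sm * M^2 / (4 * h)).
    { apply divlb; split; nra. }
    revert Hlt. unfold Rabs. destruct Rcase_abs; lra. }
  split; auto.
  assert (HW : forall t, M < t -> W t = om * (t + M)).
  { intros t Ht. unfold W. replace (k * a) with (- om * (M^2 + a^2)) by lra. rewrite Ha. field. lra. }
  set (P := fun t => om*(t+M)*S t + 2*(m*t*X t - lam*Y t)).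
  assert (DP : forall t, M < t -> is_derive P t (om * S t + 2 * m * X t)).
  { intros t Ht. unfold P. auto_derive.
    - repeat split; eexists; [apply DS|apply DX|apply DY]; lra.
    - replace (Derive (fun x => S x) t) with (4*(lam*X t + m*t*Y t)/(t-M)) by (symmetry; apply is_derive_unique; apply DS; lra).
      replace (Derive (fun x => X x) t) with ((-2*W t*Y t + lam*S t)/(t-M)) by (symmetry; apply is_derive_unique; apply DX; lra).
      replace (Derive (fun x => Y x) t) with ((2*W t*X t + m*t*S t)/(t-M)) by (symmetry; apply is_derive_unique; apply DY; lra).
      rewrite (HW t Ht). field. lra. }
  assert (HPdef : forall t, P t = om*(t+M)*S t + 2*(m*t*X t - lam*Y t)) by reflexivity.
  clearbody P.
  destruct (Rlt_le_dec (Rabs om) m) as [Hlt|Hge]; auto. exfalso.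
  assert (Hsg : exists sg, sg * om = Rabs om /\ sg * sg = 1).
  { destruct (Rle_dec 0 om). exists 1. rewrite Rabs_pos_eq; lra.
    exists (-1). rewrite Rabs_left; lra. }
  destruct Hsg as [sg [Hsg1 Hsg2]].
  assert (Hsgb : Rabs sg = 1).
  { assert (Rabs sg * Rabs sg = 1) by (rewrite <- Rabs_mult, Hsg2; apply Rabs_R1).
    pose proof (Rabs_pos sg). nra. }
  set (T0 := lam^2/(m^2*M) + M + 1).
  assert (HT0 : M + 1 <= T0 /\ lam^2 <= m^2 * M * T0).
  { assert (Hm2M : 0 < m^2*M) by (apply Rmult_lt_0_compat; [apply pow_lt|]; lra).
    unfold T0. assert (0 <= lam^2/(m^2*M)) by (apply Rmult_le_pos; [apply pow2_ge_0 | left; apply Rinv_0_lt_compat; lra]).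
    split. lra.
    replace (m^2 * M * (lam ^ 2 / (m ^ 2 * M) + M + 1)) with (lam^2 + m^2*M*(M+1)) by (field; lra).
    assert (0 <= m^2*M*(M+1)) by (apply Rmult_le_pos; lra). lra. }
  set (C := 2 * Rabs om + m + Rabs lam).
  assert (HC : 0 < C) by (unfold C; pose proof (Rabs_pos om); pose proof (Rabs_pos lam); lra).
  assert (HPpos : forall t, T0 <= t -> 0 < sg * P t /\ sg * P t <= C * t * S t).
  { intros t Ht. rewrite HPdef. destruct (F2 t) as [HX [HY HXY]].
    pose proof (Spos t ltac:(lra)) as HSt.
    replace (sg * (om * (t + M) * S t + 2 * (m * t * X t - lam * Y t)))
      with (Rabs om * (t + M) * S t + sg * (2 * (m * t * X t - lam * Y t))) by (rewrite <- Hsg1; ring).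
    set (Z := sg * (2 * (m * t * X t - lam * Y t))).
    assert (HZ2 : Z ^ 2 <= (m^2 * t^2 + lam^2) * S t ^ 2).
    { unfold Z. replace ((sg * (2 * (m * t * X t - lam * Y t)))^2) with ((sg*sg) * (4 * (m * t * X t - lam * Y t)^2)) by ring.
      rewrite Hsg2.
      pose proof (pow2_ge_0 (m * t * Y t + lam * X t)).
      assert (4 * (m * t * X t - lam * Y t) ^ 2 <= (m^2*t^2 + lam^2) * (4 * (X t ^ 2 + Y t ^ 2))) by nra.
      assert ((m^2*t^2 + lam^2) * (4 * (X t ^ 2 + Y t ^ 2)) <= (m^2*t^2 + lam^2) * S t ^ 2).
      { apply Rmult_le_compat_l; auto. nra. }
      lra. }
    assert (Hom2 : m^2 * t^2 + lam^2 < (Rabs om * (t + M))^2).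
    { assert (m * (t + M) <= Rabs om * (t + M)) by (apply Rmult_le_compat_r; lra).
      assert ((m * (t + M))^2 <= (Rabs om * (t + M))^2) by (apply pow_incr; nra).
      assert (lam^2 <= m^2 * M * t).
      { destruct HT0 as [_ HT0]. apply Rle_trans with (m^2 * M * T0); auto. apply Rmult_le_compat_l; nra. }
      assert (E : (m*(t+M))^2 = m^2*t^2 + 2*(m^2*M*t) + m^2*M^2) by ring.
      assert (0 < m^2*M*t) by (apply Rmult_lt_0_compat; [apply Rmult_lt_0_compat; [apply pow_lt|]|]; lra).
      assert (0 < m^2*M^2) by (apply Rmult_lt_0_compat; apply pow_lt; lra).
      lra. }
    split.
    - assert (Z ^ 2 < (Rabs om * (t + M) * S t) ^ 2).
      { replace ((Rabs om * (t + M) * S t) ^ 2) with ((Rabs om * (t + M))^2 * S t ^ 2) by ring.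
        assert (0 < S t ^ 2) by nra. nra. }
      assert (0 < Rabs om * (t + M) * S t) by (apply Rmult_lt_0_compat; [nra | lra]).
      nra.
    - assert (HZ : Z <= (m * t + Rabs lam) * S t).
      { unfold Z. pose proof (absN (-lam) (Y t) (X t) (S t) (m*t) HY HX ltac:(nra)) as HA.
        rewrite Rabs_Ropp in HA.
        replace (sg * (2 * (m * t * X t - lam * Y t))) with (2 * sg * (- lam * Y t + m * t * X t)) by ring.
        eapply Rle_trans. apply Rle_abs. rewrite !Rabs_mult, Hsgb, (Rabs_pos_eq 2) by lra. lra. }
      pose proof (Rabs_pos om). pose proof (Rabs_pos lam).
      assert (Rabs om * (t + M) <= 2 * Rabs om * t) by nra.
      assert (Rabs lam <= Rabs lam * t) by nra.
      assert (Rabs om * (t + M) + (m * t + Rabs lam) <= C * t) by (unfold C; nra).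
      assert ((Rabs om * (t + M) + (m * t + Rabs lam)) * S t <= C * t * S t) by (apply Rmult_le_compat_r; lra).
      nra. }
  set (p1 := sg * P T0).
  assert (Hp1 : 0 < p1) by (apply HPpos; lra).
  assert (HPmono : forall t, T0 <= t -> p1 <= sg * P t).
  { intros t Ht. apply (mono (fun s => sg * P s)); auto.
    intros s Hs. exists (sg * (om * S s + 2 * m * X s)). split.
    - apply (is_derive_scal P s sg). apply DP. lra.
    - destruct (F2 s) as [HX _]. pose proof (F1 s).
      replace (sg * (om * S s + 2 * m * X s)) with (Rabs om * S s + m * (2 * (sg * X s))) by (rewrite <- Hsg1; ring).
      assert (2 * (sg * X s) >= - S s).
      { assert (Rabs (sg * X s) = Rabs (X s)) by (rewrite Rabs_mult, Hsgb; ring).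
        pose proof (Rle_abs (- (sg * X s))) as HH. rewrite Rabs_Ropp in HH. lra. }
      assert (m * S s <= Rabs om * S s) by (apply Rmult_le_compat_r; lra).
      nra. }
  assert (Heps : 0 < p1 / (2 * C)) by (apply Rdiv_lt_0_compat; lra).
  destruct (gen_right _ M lI _ Heps HI) as [B HB].
  set (b := Rmax B T0 + 1).
  assert (Hb : B < b /\ T0 < b) by (unfold b; pose proof (Rmax_l B T0); pose proof (Rmax_r B T0); lra).
  destruct (HB b (2 * b) ltac:(lra) ltac:(lra)) as [Hex Hlt].
  assert (Hlb : p1 / (C * (2 * b)) * (2 * b - b) <=
       RInt (fun t => S t * (t ^ 2 + a ^ 2) / (t - M) ^ 2) b (2 * b)).
  { apply RInt_lb; auto. lra. intros x Hx. cbv beta.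
    assert (HxT : T0 <= x) by lra.
    destruct (HPpos x HxT) as [_ Hup]. pose proof (HPmono x HxT).
    assert (HSx : p1 / (C * (2 * b)) <= S x).
    { apply Rle_trans with (p1 / (C * x)).
      - apply divlb; split; try lra. apply Rmult_lt_0_compat; lra. apply Rmult_le_compat_l; lra.
      - apply Rmult_le_reg_r with (C * x). apply Rmult_lt_0_compat; lra.
        replace (p1 / (C * x) * (C * x)) with p1 by (field; lra). lra. }
    apply Rle_trans with (S x); auto.
    pose proof (F1 x).
    apply Rle_trans with (S x * (x - M)^2 / (x - M)^2).
    - right. field. lra.
    - apply divlb.
      + split. apply Rmult_le_pos; [lra | apply pow2_ge_0].
        apply Rmult_le_compat_l; auto. nra.
      + split. apply pow_lt; lra. lra. }
  replace (p1 / (C * (2 * b)) * (2 * b - b)) with (p1 / (2 * C)) in Hlb by (field; lra).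
  revert Hlt. unfold Rabs. destruct Rcase_abs; lra.
Qed.

Lemma solve_div (u d N : R) : u <> 0 -> u * d = N -> d = N / u.
Proof. intros Hu H. subst N. field. auto. Qed.

Theorem mainTheorem9 (M a Q m e k omega : R) :
  0 < M -> M ^ 2 = a ^ 2 + Q ^ 2 ->
  Q = 0 -> M = Rabs a ->
  0 < m -> half_integer k ->
  energy_eigenvalue M a Q m e k omega ->
  M * m > / 4.
Proof.
  intros HM HM2 HQ HMa Hm [n Hk] [lam [f1 [f2 [g1 [g2 [Hrad [[r0 [Hr0 Hnz]] [Hint _]]]]]]]].
  subst Q.
  assert (Ha : a ^ 2 = M ^ 2) by (rewrite HM2; ring).
  destruct (core M a m lam omega k (fun t => fst (f1 t)) (fun t => snd (f1 t))
              (fun t => fst (f2 t)) (fun t => snd (f2 t)) r0 HM Ha Hm) as [Hv Hom].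
  - intros t Ht. destruct (Hrad t Ht) as [d1 [d2 [[Hd1x Hd1y] [[Hd2x Hd2y] [E1 E2]]]]].
    exists (fst d1), (snd d1), (fst d2), (snd d2).
    split; [exact Hd1x|]. split; [exact Hd1y|]. split; [exact Hd2x|]. split; [exact Hd2y|].
    unfold Vrad in E1, E2.
    replace (e * 0 * t) with 0 in E1, E2 by ring.
    rewrite Rplus_0_r in E1, E2.
    set (Wt := (omega * (t ^ 2 + a ^ 2) + k * a) / (t - M)) in *.
    destruct d1 as [p1 q1]; destruct d2 as [p2 q2].
    destruct (f1 t) as [u1 v1]; destruct (f2 t) as [u2 v2]. simpl.
    pose proof (f_equal fst E1) as E1r. pose proof (f_equal snd E1) as E1i.
    pose proof (f_equal fst E2) as E2r. pose proof (f_equal snd E2) as E2i.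
    simpl in E1r, E1i, E2r, E2i.
    assert (Hu : t - M <> 0) by lra.
    repeat split; apply solve_div; auto; lra.
  - exact Hr0.
  - destruct Hnz as [Hn | Hn].
    + destruct (f1 r0) as [p q]. 
      assert (p <> 0 \/ q <> 0).
      { destruct (Req_dec p 0); destruct (Req_dec q 0); auto. subst. exfalso; apply Hn; reflexivity. }
      simpl. destruct H; [assert (0 < p^2) by (apply pow2_gt_0; auto) | assert (0 < q^2) by (apply pow2_gt_0; auto)];
      pose proof (pow2_ge_0 p); pose proof (pow2_ge_0 q);
      pose proof (pow2_ge_0 (fst (f2 r0))); pose proof (pow2_ge_0 (snd (f2 r0))); lra.
    + destruct (f2 r0) as [p q].
      assert (p <> 0 \/ q <> 0).
      { destruct (Req_dec p 0); destruct (Req_dec q 0); auto. subst. exfalso; apply Hn; reflexivity. }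
      simpl. destruct H; [assert (0 < p^2) by (apply pow2_gt_0; auto) | assert (0 < q^2) by (apply pow2_gt_0; auto)];
      pose proof (pow2_ge_0 p); pose proof (pow2_ge_0 q);
      pose proof (pow2_ge_0 (fst (f1 r0))); pose proof (pow2_ge_0 (snd (f1 r0))); lra.
  - replace (fun t => (fst (f1 t) ^ 2 + snd (f1 t) ^ 2 + fst (f2 t) ^ 2 + snd (f2 t) ^ 2) * (t ^ 2 + a ^ 2) / (t - M) ^ 2)
      with (fun r => normsq2 (f1 r) (f2 r) * (r ^ 2 + a ^ 2) / (r - M) ^ 2); auto.
    apply functional_extensionality. intros t. unfold normsq2, Cmod.
    rewrite !pow2_sqrt.
    rewrite <- (Rplus_assoc (fst (f1 t) ^ 2 + snd (f1 t) ^ 2)). reflexivity.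
    pose proof (pow2_ge_0 (fst (f2 t))); pose proof (pow2_ge_0 (snd (f2 t))); lra.
    pose proof (pow2_ge_0 (fst (f1 t))); pose proof (pow2_ge_0 (snd (f1 t))); lra.
  - assert (Hkabs : 1/2 <= Rabs k).
    { destruct (Z_le_gt_dec 0 n) as [Hn | Hn].
      - apply IZR_le in Hn. rewrite Rabs_pos_eq; lra.
      - assert (Hn' : (n <= -1)%Z) by lia. apply IZR_le in Hn'. rewrite Rabs_left; lra. }
    rewrite Ha in Hv.
    assert (E0 : omega * (2 * M ^ 2) = - (k * a)) by lra.
    assert (E : Rabs (omega * (2 * M ^ 2)) = Rabs k * M) by (rewrite E0, Rabs_Ropp, Rabs_mult, <- HMa; reflexivity).
    rewrite Rabs_mult, (Rabs_pos_eq (2 * M ^ 2)) in E by nra.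
    assert (Rabs k = 2 * M * Rabs omega) by (apply Rmult_eq_reg_r with M; nra).
    assert (M * Rabs omega < M * m) by (apply Rmult_lt_compat_l; lra).
    lra.
Qed.
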